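(* Let $J$ be a bounded half-line Jacobi matrix with $0<\inf_na_n\le\sup_na_n<\infty$, let $\mathcal R$ be the set of its right limits, and let $K\subset\mathbb{R}$ be compact. Suppose that for each $x_0\in K$ and $J^{(r)}\in\mathcal R$ there is a (complex) solution $u^+=u^+(J^{(r)},x_0)$, $n\in\mathbb{Z}$, of $a^{(r)}_nu_{n+1}+b^{(r)}_nu_n+a^{(r)}_{n-1}u_{n-1}=x_0u_n$ such that (i) $\sup_{n\in\mathbb{Z},\,x_0\in K,\,J^{(r)}\in\mathcal R}|u^+_n(J^{(r)},x_0)|<\infty$, and (ii) $\inf_{x_0\in K,\,J^{(r)}\in\mathcal R}\ a_0^{(r)}\big|u_1^+\overline{u_0^+}-\overline{u_1^+}u_0^+\big|>0$. Then the Nevai condition holds for $J$ uniformly on $K$, i.e. $\sup_{x_0\in K}\ p_n(x_0)^2/K_n(x_0,x_0)\to0$ as $n\to\infty$ (and hence the Nevai condition holds at every $x_0\in K$).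
   Context: A half-line Jacobi matrix $J$ with parameters $\{a_n,b_n\}_{n\ge1}$ ($a_n>0$) acts on $\ell^2(\{1,2,\dots\})$ by $J_{nn}=b_n$, $J_{n,n+1}=J_{n+1,n}=a_n$; $\rho$ is its spectral measure for $\delta_1$, $p_n$ ($n\ge0$) its orthonormal polynomials ($p_{-1}=0$, $p_0=1$, $xp_n=a_{n+1}p_{n+1}+b_{n+1}p_n+a_np_{n-1}$), and $K_n(x,y)=\sum_{j=0}^np_j(x)p_j(y)$. A two-sided sequence $\{a^{(r)}_n,b^{(r)}_n\}_{n\in\mathbb{Z}}$ is a right limit of $J$ if there are $m_j\to\infty$ with $a_{m_j+n}\to a^{(r)}_n$ and $b_{m_j+n}\to b^{(r)}_n$ for every $n\in\mathbb{Z}$; the corresponding two-sided Jacobi matrix is denoted $J^{(r)}$. The Nevai condition at $x_0$ means $K_n(x,x_0)^2\,d\rho(x)/K_n(x_0,x_0)\to\delta_{x_0}$ weakly. *)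

(* Defs.v *)
From Stdlib Require Import Reals ZArith.
Open Scope R_scope.

Definition Cx := (R * R)%type.
Definition Cadd (z w : Cx) : Cx := (fst z + fst w, snd z + snd w).
Definition Csub (z w : Cx) : Cx := (fst z - fst w, snd z - snd w).
Definition Cmul (z w : Cx) : Cx :=
  (fst z * fst w - snd z * snd w, fst z * snd w + snd z * fst w).
Definition Cconj (z : Cx) : Cx := (fst z, - snd z).
Definition Cscal (r : R) (z : Cx) : Cx := (r * fst z, r * snd z).
Definition Cmod (z : Cx) : R := sqrt (fst z ^ 2 + snd z ^ 2).

(* Half-line Jacobi parameters: a, b : nat -> R, where a n, b n are a_n, b_n
   for n >= 1 (the value at index 0 is irrelevant). *)

(* Access a half-line sequence at an integer index (junk value at k <= 0). *)
Definition atZ (s : nat -> R) (k : Z) : R := s (Z.to_nat k).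

Definition is_right_limit (a b : nat -> R) (ar br : Z -> R) : Prop :=
  exists m : nat -> nat,
    (forall M : nat, exists j0 : nat, forall j : nat, (j0 <= j)%nat -> (M <= m j)%nat) /\
    (forall n : Z,
        Un_cv (fun j => atZ a (Z.of_nat (m j) + n)%Z) (ar n) /\
        Un_cv (fun j => atZ b (Z.of_nat (m j) + n)%Z) (br n)).

Definition solves (ar br : Z -> R) (x0 : R) (u : Z -> Cx) : Prop :=
  forall n : Z,
    Cadd (Cadd (Cscal (ar n) (u (n + 1)%Z)) (Cscal (br n) (u n)))
         (Cscal (ar (n - 1)%Z) (u (n - 1)%Z)) = Cscal x0 (u n).

(* opoly_pair a b x n = (p_n(x), p_{n+1}(x)), from p_{-1} = 0, p_0 = 1,
   x p_n = a_{n+1} p_{n+1} + b_{n+1} p_n + a_n p_{n-1}. *)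
Fixpoint opoly_pair (a b : nat -> R) (x : R) (n : nat) : R * R :=
  match n with
  | O => (1, (x - b 1%nat) / a 1%nat)
  | S k => let pq := opoly_pair a b x k in
           (snd pq, ((x - b (k + 2)%nat) * snd pq - a (k + 1)%nat * fst pq) / a (k + 2)%nat)
  end.

Definition opoly (a b : nat -> R) (n : nat) (x : R) : R := fst (opoly_pair a b x n).

Definition CDkernel (a b : nat -> R) (n : nat) (x : R) : R :=
  sum_f_R0 (fun j => opoly a b j x ^ 2) n.

(* Main.v *)
Require Import Defs.
From Stdlib Require Import Reals ZArith.
From Stdlib Require Import Lra Lia Psatz Classical ClassicalEpsilon.
Open Scope R_scope.

Lemma Rabs_le_inv' x a : Rabs x <= a -> -a <= x <= a.
Proof. unfold Rabs; destruct (Rcase_abs x); lra. Qed.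

Definition strict (phi : nat -> nat) := forall n, (phi n < phi (S n))%nat.

Lemma strict_lt phi : strict phi -> forall m n, (m < n)%nat -> (phi m < phi n)%nat.
Proof. intros H m n Hmn; induction Hmn. apply H. specialize (H m0); lia. Qed.

Lemma strict_ge phi : strict phi -> forall n, (n <= phi n)%nat.
Proof. intros H n; induction n. lia. specialize (H n); lia. Qed.

Lemma strict_comp f g : strict f -> strict g -> strict (fun n => f (g n)).
Proof. intros Hf Hg n. apply strict_lt; auto. Qed.

Lemma cv_sub u l phi : Un_cv u l -> strict phi -> Un_cv (fun n => u (phi n)) l.
Proof.
  intros H Hp eps He. destruct (H eps He) as [N HN]. exists N; intros n Hn.
  apply HN. pose proof (strict_ge phi Hp n); lia.
Qed.

Lemma cv_ev u w l : Un_cv u l -> (exists N, forall n, (N <= n)%nat -> u n = w n) -> Un_cv w l.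
Proof.
  intros H [N0 HN0] eps He. destruct (H eps He) as [N HN]. exists (max N N0); intros n Hn.
  rewrite <- HN0 by lia. apply HN; lia.
Qed.

Lemma cv_const c : Un_cv (fun _ => c) c.
Proof. intros eps He; exists 0%nat; intros; unfold Rdist; rewrite Rminus_diag, Rabs_R0; lra. Qed.

Lemma cv_le_ev u l c : Un_cv u l -> (exists N, forall n, (N <= n)%nat -> u n <= c) -> l <= c.
Proof.
  intros H [N HN]. apply (@Rle_cv_lim (fun n => u (n + N)%nat) (fun _ => c) l c).
  intros; apply HN; lia.
  intros eps He. destruct (H eps He) as [N1 HN1]. exists N1; intros; apply HN1; lia.
  apply cv_const.
Qed.

Lemma cv_ge_ev u l c : Un_cv u l -> (exists N, forall n, (N <= n)%nat -> c <= u n) -> c <= l.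
Proof.
  intros H [N HN]. apply (@Rle_cv_lim (fun _ => c) (fun n => u (n + N)%nat) c l).
  intros; apply HN; lia.
  apply cv_const.
  intros eps He. destruct (H eps He) as [N1 HN1]. exists N1; intros; apply HN1; lia.
Qed.

Lemma BW_sub (u : nat -> R) (M : R) : (forall n, Rabs (u n) <= M) ->
  exists phi, strict phi /\ exists l, Un_cv (fun n => u (phi n)) l.
Proof.
  intros HM.
  destruct (Bolzano_Weierstrass u (fun c => -M <= c <= M) (compact_P3 _ _)) as [l Hl].
  { intros n; specialize (HM n); apply Rabs_le_inv' in HM; lra. }
  assert (Hch : forall N k : nat, exists p, (N <= p)%nat /\ Rabs (u p - l) < / INR (S k)).
  { intros N k. assert (Hpos : 0 < / INR (S k)) by (apply Rinv_0_lt_compat, lt_0_INR; lia).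
    destruct (Hl (disc l (mkposreal _ Hpos)) N) as [p [Hp1 Hp2]].
    exists (mkposreal _ Hpos); intros y Hy; exact Hy.
    exists p; split; auto. }
  pose (ch := fun N k => proj1_sig (constructive_indefinite_description _ (Hch N k))).
  assert (Hchs : forall N k, (N <= ch N k)%nat /\ Rabs (u (ch N k) - l) < / INR (S k)).
  { intros N k; unfold ch; destruct (constructive_indefinite_description _ _); auto. }
  pose (phi := fix phi k := match k with O => ch O O | S k => ch (S (phi k)) (S k) end).
  exists phi; split.
  { intros n; simpl; destruct (Hchs (S (phi n)) (S n)); lia. }
  exists l; intros eps He. destruct (archimed_cor1 eps He) as [N [HN1 HN2]].
  exists N; intros n Hn. unfold Rdist.
  assert (Hn' : Rabs (u (phi n) - l) < / INR (S n)).
  { destruct n; simpl; apply Hchs. }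
  eapply Rlt_le_trans; [exact Hn'|]. apply Rlt_le, Rle_lt_trans with (/ INR N); auto.
  apply Rinv_le_contravar. apply lt_0_INR; lia. apply le_INR; lia.
Qed.


Fixpoint psi_iter (Th : nat -> (nat -> nat) -> nat -> nat) (k : nat) : nat -> nat :=
  match k with O => fun n => n | S k => fun n => psi_iter Th k (Th k (psi_iter Th k) n) end.

Lemma diag (F : nat -> nat -> R) (B : nat -> R) : (forall i j, Rabs (F i j) <= B i) ->
  exists phi, strict phi /\ forall i, exists l, Un_cv (fun j => F i (phi j)) l.
Proof.
  intros HB.
  assert (H : forall i (psi : nat -> nat), exists th, strict th /\
            exists l, Un_cv (fun n => F i (psi (th n))) l).
  { intros i psi. apply (BW_sub (fun n => F i (psi n)) (B i)); auto. }
  pose (Th := fun i psi => proj1_sig (constructive_indefinite_description _ (H i psi))).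
  assert (HTh : forall i psi, strict (Th i psi) /\ exists l, Un_cv (fun n => F i (psi (Th i psi n))) l).
  { intros; unfold Th; destruct (constructive_indefinite_description _ _); auto. }
  assert (Hst : forall k, strict (psi_iter Th k)).
  { induction k; simpl. intros n; lia. apply strict_comp; auto. apply HTh. }
  assert (Hrho : forall d k, exists rho, (forall n, (n <= rho n)%nat) /\
            forall n, psi_iter Th (k + d) n = psi_iter Th k (rho n)).
  { induction d; intros k.
    - exists (fun n => n); split; [auto|]. intros n; rewrite Nat.add_0_r; auto.
    - destruct (IHd k) as [rho [H1 H2]]. exists (fun n => rho (Th (k+d)%nat (psi_iter Th (k+d)) n)).
      split. intros n; pose proof (strict_ge _ (proj1 (HTh (k+d)%nat (psi_iter Th (k+d)))) n).
      specialize (H1 (Th (k + d)%nat (psi_iter Th (k + d)) n)); lia.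
      intros n; rewrite Nat.add_succ_r; simpl; apply H2. }
  exists (fun j => psi_iter Th j j); split.
  - intros j; simpl. apply strict_lt; auto.
    pose proof (strict_ge _ (proj1 (HTh j (psi_iter Th j))) (S j)); lia.
  - intros i. destruct (proj2 (HTh i (psi_iter Th i))) as [l Hl]. exists l.
    intros eps He. destruct (Hl eps He) as [N HN]. exists (max N (S i)); intros j Hj.
    destruct (Hrho (j - S i)%nat (S i)) as [rho [H1 H2]].
    replace (psi_iter Th j j) with (psi_iter Th (S i) (rho j)).
    simpl. apply HN. specialize (H1 j); lia.
    rewrite <- H2. f_equal; lia.
Qed.

Definition zenum (n : nat) : Z :=
  if Nat.even n then Z.of_nat (Nat.div2 n) else (- Z.of_nat (Nat.div2 n))%Z.

Lemma zenum_surj z : exists n, zenum n = z.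
Proof.
  destruct (Z_le_gt_dec 0 z).
  - exists (2 * Z.to_nat z)%nat. unfold zenum. rewrite Nat.div2_double, Nat.even_mul. simpl. lia.
  - exists (S (2 * Z.to_nat (- z)))%nat. unfold zenum. rewrite Nat.div2_succ_double, Nat.even_succ, Nat.odd_mul. simpl. lia.
Qed.

Lemma diag_gen (I : Type) (e : nat -> I) (He : forall i, exists n, e n = i)
  (F : I -> nat -> R) (B : I -> R) : (forall i j, Rabs (F i j) <= B i) ->
  exists phi, strict phi /\ exists L : I -> R, forall i, Un_cv (fun j => F i (phi j)) (L i).
Proof.
  intros HB. destruct (diag (fun n j => F (e n) j) (fun n => B (e n))) as [phi [H1 H2]].
  intros; apply HB.
  exists phi; split; auto.
  assert (H3 : forall i, exists l, Un_cv (fun j => F i (phi j)) l).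
  { intros i. destruct (He i) as [n <-]. apply H2. }
  exists (fun i => proj1_sig (constructive_indefinite_description _ (H3 i))).
  intros i; destruct (constructive_indefinite_description _ _); auto.
Qed.


Lemma sq_le x c : -c <= x <= c -> x^2 <= c^2.
Proof. intros H. assert (0 <= (c-x)*(c+x)) by (apply Rmult_le_pos; lra). simpl; nra. Qed.

Lemma W_bound (a v1 v0 h1 h0 CC M : R) : Rabs a <= CC -> Rabs h0 <= M -> Rabs h1 <= M ->
  (a * (v1 * h0 - h1 * v0)) ^ 2 <= 2 * CC^2 * M^2 * (v1 ^ 2 + v0 ^ 2).
Proof.
  intros Ha H0 H1.
  apply Rabs_le_inv' in Ha. apply Rabs_le_inv' in H0. apply Rabs_le_inv' in H1.
  assert (a^2 <= CC^2) by (apply sq_le; auto). assert (h0^2 <= M^2) by (apply sq_le; auto). assert (h1^2 <= M^2) by (apply sq_le; auto).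
  assert ((v1 * h0 - h1 * v0)^2 <= 2 * ((v1*h0)^2 + (h1*v0)^2)) by (pose proof (pow2_ge_0 (v1*h0 + h1*v0)); simpl in *; nra).
  assert ((v1*h0)^2 + (h1*v0)^2 <= M^2 * (v1^2 + v0^2)).
  { replace ((v1*h0)^2 + (h1*v0)^2) with (v1^2 * h0^2 + v0^2 * h1^2) by ring.
    pose proof (pow2_ge_0 v1). pose proof (pow2_ge_0 v0).
    pose proof (Rmult_le_compat_l _ _ _ H5 H2). pose proof (Rmult_le_compat_l _ _ _ H6 H3). lra. }
  replace ((a * (v1 * h0 - h1 * v0)) ^ 2) with (a^2 * (v1 * h0 - h1 * v0)^2) by ring.
  pose proof (pow2_ge_0 (v1 * h0 - h1 * v0)). pose proof (pow2_ge_0 CC).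
  apply Rle_trans with (CC^2 * (v1 * h0 - h1 * v0)^2).
  apply Rmult_le_compat_r; auto.
  replace (2 * CC ^ 2 * M ^ 2 * (v1 ^ 2 + v0 ^ 2)) with (CC^2 * (2 * (M^2 * (v1 ^ 2 + v0 ^ 2)))) by ring.
  apply Rmult_le_compat_l; auto. lra.
Qed.

Lemma W_zero (ar br : Z -> R) (x0 : R) (v h : Z -> R) (CC M : R) :
  (forall n, Rabs (ar n) <= CC) -> (forall n, Rabs (h n) <= M) ->
  (forall n : Z, ar n * h (n+1)%Z + br n * h n + ar (n-1)%Z * h (n-1)%Z = x0 * h n) ->
  (forall n : Z, (n <= -1)%Z -> ar n * v (n+1)%Z + br n * v n + ar (n-1)%Z * v (n-1)%Z = x0 * v n) ->
  (forall L : nat, sum_f_R0 (fun k => v (- Z.of_nat k)%Z ^ 2) L <= 1) ->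
  ar (-1)%Z * (v 0%Z * h (-1)%Z - h 0%Z * v (-1)%Z) = 0.
Proof.
  intros Har Hh Eh Ev Hs.
  set (W := fun n : Z => ar n * (v (n+1)%Z * h n - h (n+1)%Z * v n)).
  assert (Wc : forall k : nat, W (-1 - Z.of_nat k)%Z = W (-1)%Z).
  { induction k. f_equal; lia. rewrite <- IHk.
    set (n := (-1 - Z.of_nat k)%Z).
    replace (-1 - Z.of_nat (S k))%Z with (n - 1)%Z by lia.
    assert (Hn : (n <= -1)%Z) by lia.
    pose proof (Ev n Hn) as E1. pose proof (Eh n) as E2. unfold W.
    replace (n - 1 + 1)%Z with n by ring.
    apply Rminus_diag_uniq.
    replace (ar (n - 1)%Z * (v n * h (n - 1)%Z - h n * v (n - 1)%Z) -
             ar n * (v (n + 1)%Z * h n - h (n + 1)%Z * v n))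
      with (v n * (ar n * h (n+1)%Z + br n * h n + ar (n-1)%Z * h (n-1)%Z - x0 * h n)
            - h n * (ar n * v (n+1)%Z + br n * v n + ar (n-1)%Z * v (n-1)%Z - x0 * v n)) by ring.
    rewrite E1, E2. ring. }
  assert (Hb : forall L : nat, W (-1)%Z ^ 2 * INR (S L) <= 4 * CC^2 * M^2).
  { intros L. rewrite <- sum_cte.
    apply Rle_trans with (sum_f_R0 (fun k => 2 * CC^2 * M^2 *
       (v (- Z.of_nat k)%Z ^ 2 + v (- Z.of_nat (S k))%Z ^ 2)) L).
    - apply sum_Rle; intros k _. rewrite <- (Wc k). unfold W.
      replace (-1 - Z.of_nat k + 1)%Z with (- Z.of_nat k)%Z by ring.
      replace (-1 - Z.of_nat k)%Z with (- Z.of_nat (S k))%Z by lia.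
      apply W_bound; auto.
    - rewrite (sum_eq _ (fun k => (v (- Z.of_nat k)%Z ^ 2 + v (- Z.of_nat (S k))%Z ^ 2) * (2 * CC^2 * M^2)))
        by (intros; ring).
      rewrite <- scal_sum, sum_plus.
      assert (E : sum_f_R0 (fun k => v (- Z.of_nat k)%Z ^ 2) (S L) =
                  v 0%Z ^2 + sum_f_R0 (fun k => v (- Z.of_nat (S k))%Z ^ 2) L).
      { rewrite decomp_sum by lia. simpl pred. reflexivity. }
      pose proof (Hs L). pose proof (Hs (S L)). assert (0 <= v 0%Z ^ 2) by nra.
      assert (0 <= 2 * CC^2 * M^2) by nra. nra. }
  assert (Hw : W (-1)%Z = 0).
  { apply NNPP; intros Hne.
    set (w := W (-1)%Z) in *.
    assert (Hp : 0 < w ^ 2) by (simpl; rewrite Rmult_1_r; apply Rsqr_pos_lt; auto).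
    set (K := 4 * CC^2 * M^2).
    assert (HK : 0 <= K) by (unfold K; pose proof (pow2_ge_0 CC); pose proof (pow2_ge_0 M);
      apply Rmult_le_pos; [apply Rmult_le_pos|]; lra).
    destruct (archimed_cor1 (w^2 / (K+1))) as [N [HN1 HN2]].
    { apply Rdiv_lt_0_compat; lra. }
    assert (Ht : 0 < INR N) by (apply lt_0_INR; auto).
    assert (H1 : K + 1 < w^2 * INR N).
    { pose proof (Rmult_lt_compat_l (INR N * (K+1)) _ _ (Rmult_lt_0_compat _ _ Ht (Rplus_le_lt_0_compat _ _ HK Rlt_0_1)) HN1) as H.
      replace (INR N * (K + 1) * / INR N) with (K+1) in H by (field; lra).
      replace (INR N * (K + 1) * (w ^ 2 / (K + 1))) with (w^2 * INR N) in H by (field; lra).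
      exact H. }
    specialize (Hb (pred N)). replace (S (pred N)) with N in Hb by lia. fold K in Hb. lra. }
  exact Hw.
Qed.

Lemma key (ar br : Z -> R) (x0 : R) (v f g : Z -> R) (CC M : R) :
  (forall n, Rabs (ar n) <= CC) ->
  (forall n, Rabs (f n) <= M) -> (forall n, Rabs (g n) <= M) ->
  (forall n : Z, ar n * f (n+1)%Z + br n * f n + ar (n-1)%Z * f (n-1)%Z = x0 * f n) ->
  (forall n : Z, ar n * g (n+1)%Z + br n * g n + ar (n-1)%Z * g (n-1)%Z = x0 * g n) ->
  (forall n : Z, (n <= -1)%Z -> ar n * v (n+1)%Z + br n * v n + ar (n-1)%Z * v (n-1)%Z = x0 * v n) ->
  (forall L : nat, sum_f_R0 (fun k => v (- Z.of_nat k)%Z ^ 2) L <= 1) ->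
  ar 0%Z * (f 1%Z * g 0%Z - g 1%Z * f 0%Z) <> 0 ->
  v 0%Z = 0.
Proof.
  intros Har Hf Hg Ef Eg Ev Hs Hw.
  pose proof (W_zero ar br x0 v f CC M Har Hf Ef Ev Hs) as W1.
  pose proof (W_zero ar br x0 v g CC M Har Hg Eg Ev Hs) as W2.
  assert (Hc : ar 0%Z * (f 1%Z * g 0%Z - g 1%Z * f 0%Z) = ar (-1)%Z * (f 0%Z * g (-1)%Z - g 0%Z * f (-1)%Z)).
  { pose proof (Ef 0%Z) as E1. pose proof (Eg 0%Z) as E2. simpl in E1, E2.
    apply Rminus_diag_uniq.
    replace (ar 0%Z * (f 1%Z * g 0%Z - g 1%Z * f 0%Z) - ar (-1)%Z * (f 0%Z * g (-1)%Z - g 0%Z * f (-1)%Z))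
      with (g 0%Z * (ar 0%Z * f 1%Z + br 0%Z * f 0%Z + ar (-1)%Z * f (-1)%Z - x0 * f 0%Z)
           - f 0%Z * (ar 0%Z * g 1%Z + br 0%Z * g 0%Z + ar (-1)%Z * g (-1)%Z - x0 * g 0%Z)) by ring.
    rewrite E1, E2. ring. }
  rewrite Hc in Hw.
  assert (Ha : ar (-1)%Z <> 0) by (intro H; apply Hw; rewrite H; ring).
  assert (Hd : f 0%Z * g (-1)%Z - g 0%Z * f (-1)%Z <> 0) by (intro H; apply Hw; rewrite H; ring).
  apply Rmult_integral in W1; destruct W1 as [W1|W1]; [contradiction|].
  apply Rmult_integral in W2; destruct W2 as [W2|W2]; [contradiction|].
  assert (v 0%Z * (f 0%Z * g (-1)%Z - g 0%Z * f (-1)%Z) = 0).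
  { replace (v 0%Z * (f 0%Z * g (-1)%Z - g 0%Z * f (-1)%Z)) with
      (f 0%Z * (v 0%Z * g (-1)%Z - g 0%Z * v (-1)%Z) - g 0%Z * (v 0%Z * f (-1)%Z - f 0%Z * v (-1)%Z)) by ring.
    rewrite W1, W2; ring. }
  apply Rmult_integral in H; destruct H; [auto|contradiction].
Qed.


Lemma opoly_rec a b x m : a (m+2)%nat <> 0 ->
  a (m+2)%nat * opoly a b (m+2) x + b (m+2)%nat * opoly a b (m+1) x + a (m+1)%nat * opoly a b m x
  = x * opoly a b (m+1) x.
Proof.
  intros Ha. unfold opoly.
  replace (m+2)%nat with (S (S m)) by lia. replace (m+1)%nat with (S m) by lia.
  simpl fst. simpl opoly_pair at 1. simpl fst.
  replace (S (S m)) with (m+2)%nat by lia. replace (S m) with (m+1)%nat by lia.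
  field. auto.
Qed.

Lemma opoly0 a b x : opoly a b 0 x = 1.
Proof. reflexivity. Qed.

Lemma sum_term_le (c : nat -> R) n i : (forall k, 0 <= c k) -> (i <= n)%nat -> c i <= sum_f_R0 c n.
Proof.
  intros Hc Hi. induction n.
  - replace i with 0%nat by lia. simpl; lra.
  - simpl. destruct (Nat.eq_dec i (S n)). subst; pose proof (cond_pos_sum c n Hc); lra.
    pose proof (Hc (S n)); assert (c i <= sum_f_R0 c n) by (apply IHn; lia). lra.
Qed.

Lemma CD_ge1 a b n x : 1 <= CDkernel a b n x.
Proof.
  unfold CDkernel. pose proof (sum_term_le (fun j => opoly a b j x ^ 2) n 0) as H.
  simpl in H. rewrite opoly0 in H. replace (1*(1*1)) with 1 in H by ring. apply H.
  intros; apply pow2_ge_0. lia.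
Qed.

Lemma P_le_CD a b n x i : (i <= n)%nat -> opoly a b i x ^ 2 <= CDkernel a b n x.
Proof. intros; apply (sum_term_le (fun j => opoly a b j x ^ 2)); auto. intros; apply pow2_ge_0. Qed.

Lemma rev_sum (c : nat -> R) : (forall k, 0 <= c k) ->
  forall n L, (L <= n)%nat -> sum_f_R0 (fun k => c (n - k)%nat) L <= sum_f_R0 c n.
Proof.
  intros Hc n. induction n; intros L HL.
  - replace L with 0%nat by lia. simpl; lra.
  - destruct L.
    + simpl sum_f_R0. rewrite ?Nat.sub_0_r. pose proof (cond_pos_sum c n Hc); lra.
    + rewrite decomp_sum by lia. simpl pred.
      change (sum_f_R0 (fun i => c (S n - S i)%nat) L) with (sum_f_R0 (fun i => c (n - i)%nat) L).
      cbv beta. rewrite ?Nat.sub_0_r.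
      simpl sum_f_R0 at 2. pose proof (IHn L ltac:(lia)). lra.
Qed.

Lemma sq_le1 y : y ^ 2 <= 1 -> Rabs y <= 1.
Proof. intros H; unfold Rabs; destruct (Rcase_abs y); simpl in H; nra. Qed.

Lemma ratio_le1 p s : 0 < s -> p ^ 2 <= s -> Rabs (p / sqrt s) <= 1.
Proof.
  intros Hs Hp. apply sq_le1. assert (Hq : 0 < sqrt s) by (apply sqrt_lt_R0; auto).
  replace ((p / sqrt s)^2) with (p^2 / (sqrt s * sqrt s)) by (field; lra).
  rewrite sqrt_sqrt by lra. apply Rmult_le_reg_r with s; auto.
  replace (p ^ 2 / s * s) with (p^2) by (field; lra). lra.
Qed.

Lemma ratio_sq p s : 0 < s -> (p / sqrt s) ^ 2 = p ^ 2 / s.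
Proof.
  intros Hs. assert (Hq : 0 < sqrt s) by (apply sqrt_lt_R0; auto).
  replace ((p / sqrt s)^2) with (p^2 / (sqrt s * sqrt s)) by (field; lra).
  rewrite sqrt_sqrt by lra. auto.
Qed.

Lemma fst_le_Cmod z : Rabs (fst z) <= Cmod z.
Proof.
  unfold Cmod. rewrite <- sqrt_Rsqr_abs. apply sqrt_le_1_alt. unfold Rsqr; simpl.
  pose proof (pow2_ge_0 (snd z)); simpl in H; lra.
Qed.

Lemma snd_le_Cmod z : Rabs (snd z) <= Cmod z.
Proof.
  unfold Cmod. rewrite <- sqrt_Rsqr_abs. apply sqrt_le_1_alt. unfold Rsqr; simpl.
  pose proof (pow2_ge_0 (fst z)); simpl in H; lra.
Qed.

Lemma wr_Cmod z1 z0 : fst z1 * snd z0 - snd z1 * fst z0 = 0 ->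
  Cmod (Csub (Cmul z1 (Cconj z0)) (Cmul (Cconj z1) z0)) = 0.
Proof.
  intros H. destruct z1 as [f1 g1], z0 as [f0 g0]. simpl in H.
  unfold Cmod, Csub, Cmul, Cconj; simpl.
  replace (f1 * f0 - g1 * - g0 - (f1 * f0 - - g1 * g0)) with 0 by ring.
  replace (f1 * - g0 + g1 * f0 - (f1 * g0 + - g1 * f0)) with (-2 * (f1 * g0 - g1 * f0)) by ring.
  rewrite H. replace ((0 * (0 * 1) + -2 * 0 * (-2 * 0 * 1))) with 0 by ring. apply sqrt_0.
Qed.

Lemma cv_sq u l : Un_cv u l -> Un_cv (fun n => u n ^ 2) (l ^ 2).
Proof.
  intros H. pose proof (CV_mult u u l l H H) as H2.
  replace (l^2) with (l*l) by ring. eapply cv_ev; [exact H2|]. exists 0%nat; intros; ring.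
Qed.

Lemma cv_sum (G : nat -> nat -> R) (l : nat -> R) L : (forall k, Un_cv (G k) (l k)) ->
  Un_cv (fun j => sum_f_R0 (fun k => G k j) L) (sum_f_R0 l L).
Proof.
  intros H. induction L; simpl. apply H. apply CV_plus; auto.
Qed.


Theorem proposition7p2
  (a b : nat -> R) (K : R -> Prop)
  (Ha : exists c Cst : R, 0 < c /\ forall n : nat, (1 <= n)%nat -> c <= a n <= Cst)
  (Hb : exists B : R, forall n : nat, (1 <= n)%nat -> Rabs (b n) <= B)
  (HK : compact K)
  (U : (Z -> R) -> (Z -> R) -> R -> Z -> Cx)
  (Hsol : forall ar br x0, is_right_limit a b ar br -> K x0 -> solves ar br x0 (U ar br x0))
  (Hi : exists M : R, forall ar br x0 (n : Z),
          is_right_limit a b ar br -> K x0 -> Cmod (U ar br x0 n) <= M)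
  (Hii : exists delta : R, 0 < delta /\ forall ar br x0,
          is_right_limit a b ar br -> K x0 ->
          delta <= ar 0%Z * Cmod (Csub (Cmul (U ar br x0 1%Z) (Cconj (U ar br x0 0%Z)))
                                       (Cmul (Cconj (U ar br x0 1%Z)) (U ar br x0 0%Z)))) :
  forall eps : R, 0 < eps -> exists N : nat, forall n : nat, (N <= n)%nat ->
    forall x0 : R, K x0 -> opoly a b n x0 ^ 2 / CDkernel a b n x0 <= eps.
Proof.
  intros eps Heps.
  destruct Ha as [c [Cst [Hc HaB]]]. destruct Hb as [Bb HbB].
  destruct Hi as [M HM]. destruct Hii as [delta [Hdelta Hdel]].
  apply NNPP; intros Hno.
  assert (Hex : forall N : nat, exists p : nat * R, (N <= fst p)%nat /\ K (snd p) /\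
     eps < opoly a b (fst p) (snd p) ^ 2 / CDkernel a b (fst p) (snd p)).
  { intros N. apply NNPP; intros H. apply Hno. exists N; intros n Hn x Kx.
    apply Rnot_lt_le; intros Hlt. apply H. exists (n, x); simpl; auto. }
  pose (pj := fun N => proj1_sig (constructive_indefinite_description _ (Hex N))).
  assert (Hpj : forall N, (N <= fst (pj N))%nat /\ K (snd (pj N)) /\
     eps < opoly a b (fst (pj N)) (snd (pj N)) ^ 2 / CDkernel a b (fst (pj N)) (snd (pj N))).
  { intros N; unfold pj; destruct (constructive_indefinite_description _ _); auto. }
  set (nj := fun N => fst (pj N)). set (xj := fun N => snd (pj N)).
  assert (Hnj : forall N, (N <= nj N)%nat) by (intros; apply Hpj).
  assert (Hxj : forall N, K (xj N)) by (intros; apply Hpj).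
  assert (Hrat : forall N, eps < opoly a b (nj N) (xj N) ^ 2 / CDkernel a b (nj N) (xj N)) by (intros; apply Hpj).
  clearbody nj xj. clear Hpj pj Hex.
  assert (HCst : 0 <= Cst) by (destruct (HaB 1%nat (le_n 1)); lra).
  assert (HBb : 0 <= Bb) by (pose proof (HbB 1%nat (le_n 1)); pose proof (Rabs_pos (b 1%nat)); lra).
  set (CA := Cst + Rabs (a 0%nat)). set (CB := Bb + Rabs (b 0%nat)).
  assert (HaA : forall i, Rabs (a i) <= CA).
  { intros i; unfold CA; destruct i. pose proof (Rabs_pos (a 0%nat)); lra.
    destruct (HaB (S i)) as [H1 H2]; [lia|]. rewrite Rabs_right by lra. pose proof (Rabs_pos (a 0%nat)); lra. }
  assert (HbA : forall i, Rabs (b i) <= CB).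
  { intros i; unfold CB; destruct i. pose proof (Rabs_pos (b 0%nat)); lra.
    pose proof (HbB (S i) ltac:(lia)). pose proof (Rabs_pos (b 0%nat)); lra. }
  assert (Hapos : forall i, (1 <= i)%nat -> a i <> 0) by (intros i Hi; destruct (HaB i Hi); lra).
  destruct (compact_P1 K HK) as [mK [MK HmK]].
  destruct (BW_sub xj (Rabs mK + Rabs MK)) as [ph1 [Hph1 [x0 Hx0]]].
  { intros n; destruct (HmK _ (Hxj n)). apply Rabs_le.
    pose proof (Rabs_pos mK); pose proof (Rabs_pos MK);
    pose proof (Rle_abs mK); pose proof (Rle_abs MK); pose proof (Rabs_le_inv' mK (Rabs mK) (Rle_refl _)); lra. }
  destruct (diag_gen Z zenum zenum_surj
     (fun k j => atZ a (Z.of_nat (S (nj (ph1 j))) + k)%Z) (fun _ => CA)) as [ph2 [Hph2 [ar Har]]].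
  { intros; unfold atZ; apply HaA. }
  destruct (diag_gen Z zenum zenum_surj
     (fun k j => atZ b (Z.of_nat (S (nj (ph1 (ph2 j)))) + k)%Z) (fun _ => CB)) as [ph3 [Hph3 [br Hbr]]].
  { intros; unfold atZ; apply HbA. }
  set (V := fun (k : Z) (j : nat) => let j' := ph1 (ph2 (ph3 j)) in
     if Z.leb k 0 then opoly a b (Z.to_nat (Z.of_nat (nj j') + k)) (xj j') / sqrt (CDkernel a b (nj j') (xj j'))
     else 0).
  destruct (diag_gen Z zenum zenum_surj V (fun _ => 1)) as [ph4 [Hph4 [v Hv]]].
  { intros k j; unfold V. destruct (Z.leb k 0) eqn:E.
    - apply Z.leb_le in E. apply ratio_le1. pose proof (CD_ge1 a b (nj (ph1 (ph2 (ph3 j)))) (xj (ph1 (ph2 (ph3 j))))); lra.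
      apply P_le_CD; lia.
    - rewrite Rabs_R0; lra. }
  set (psi := fun j => ph1 (ph2 (ph3 (ph4 j)))).
  assert (Hpsi : forall j, (j <= psi j)%nat).
  { intros j. apply strict_ge. unfold psi.
    apply strict_comp; [exact Hph1|]. apply strict_comp; [exact Hph2|]. apply strict_comp; [exact Hph3|exact Hph4]. }
  assert (cX : Un_cv (fun j => xj (psi j)) x0).
  { apply (cv_sub (fun j => xj (ph1 j)) x0 (fun j => ph2 (ph3 (ph4 j)))); auto.
    apply strict_comp; [exact Hph2|]. apply strict_comp; [exact Hph3|exact Hph4]. }
  assert (cA : forall k, Un_cv (fun j => atZ a (Z.of_nat (S (nj (psi j))) + k)%Z) (ar k)).
  { intros k. apply (cv_sub (fun j => atZ a (Z.of_nat (S (nj (ph1 (ph2 j)))) + k)%Z) (ar k)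
       (fun j => ph3 (ph4 j))); auto. apply strict_comp; [exact Hph3|exact Hph4]. }
  assert (cB : forall k, Un_cv (fun j => atZ b (Z.of_nat (S (nj (psi j))) + k)%Z) (br k)).
  { intros k. apply (cv_sub (fun j => atZ b (Z.of_nat (S (nj (ph1 (ph2 (ph3 j))))) + k)%Z) (br k)
       ph4); auto. }
  assert (cV : forall k, Un_cv (fun j => V k (ph4 j)) (v k)) by auto.
  assert (Kx0 : K x0).
  { apply NNPP; intros Hn. destruct (compact_P2 K HK x0 Hn) as [del Hdel'].
    destruct (cX del (cond_pos del)) as [N HN]. apply (Hdel' (xj (psi N))).
    unfold disc. apply HN; lia. apply Hxj. }
  assert (Hrl : is_right_limit a b ar br).
  { exists (fun j => S (nj (psi j))). split.
    - intros Mx. exists Mx. intros j Hj. pose proof (Hnj (psi j)); pose proof (Hpsi j); lia.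
    - intros n; split; auto. }
  pose proof (Hsol ar br x0 Hrl Kx0) as Hs.
  set (u := U ar br x0) in *.
  set (f := fun n => fst (u n)). set (g := fun n => snd (u n)).
  assert (Ef : forall n : Z, ar n * f (n+1)%Z + br n * f n + ar (n-1)%Z * f (n-1)%Z = x0 * f n).
  { intros n. pose proof (f_equal fst (Hs n)) as E. unfold Cadd, Cscal in E; simpl in E. exact E. }
  assert (Eg : forall n : Z, ar n * g (n+1)%Z + br n * g n + ar (n-1)%Z * g (n-1)%Z = x0 * g n).
  { intros n. pose proof (f_equal snd (Hs n)) as E. unfold Cadd, Cscal in E; simpl in E. exact E. }
  assert (Hf : forall n, Rabs (f n) <= M).
  { intros n; eapply Rle_trans; [apply fst_le_Cmod|]. apply HM; auto. }
  assert (Hg : forall n, Rabs (g n) <= M).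
  { intros n; eapply Rle_trans; [apply snd_le_Cmod|]. apply HM; auto. }
  assert (Har' : forall n, Rabs (ar n) <= CA).
  { intros n. apply Rabs_le. split.
    - apply (cv_ge_ev _ _ _ (cA n)). exists 0%nat; intros; unfold atZ.
      pose proof (HaA (Z.to_nat (Z.of_nat (S (nj (psi n0))) + n))). apply Rabs_le_inv' in H0; lra.
    - apply (cv_le_ev _ _ _ (cA n)). exists 0%nat; intros; unfold atZ.
      pose proof (HaA (Z.to_nat (Z.of_nat (S (nj (psi n0))) + n))). apply Rabs_le_inv' in H0; lra. }
  assert (Hw : ar 0%Z * (f 1%Z * g 0%Z - g 1%Z * f 0%Z) <> 0).
  { intros H0. pose proof (Hdel ar br x0 Hrl Kx0) as Hd. fold u in Hd.
    apply Rmult_integral in H0. destruct H0 as [H0|H0].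
    - rewrite H0 in Hd; lra.
    - rewrite wr_Cmod in Hd. lra. exact H0. }
  assert (Ev : forall n : Z, (n <= -1)%Z -> ar n * v (n+1)%Z + br n * v n + ar (n-1)%Z * v (n-1)%Z = x0 * v n).
  { intros n Hn.
    assert (L1 : Un_cv (fun j => atZ a (Z.of_nat (S (nj (psi j))) + n)%Z * V (n+1)%Z (ph4 j)
        + atZ b (Z.of_nat (S (nj (psi j))) + n)%Z * V n (ph4 j)
        + atZ a (Z.of_nat (S (nj (psi j))) + (n-1))%Z * V (n-1)%Z (ph4 j))
        (ar n * v (n+1)%Z + br n * v n + ar (n-1)%Z * v (n-1)%Z)).
    { apply CV_plus; [apply CV_plus|]; apply CV_mult; auto. }
    assert (L2 : Un_cv (fun j => xj (psi j) * V n (ph4 j)) (x0 * v n)).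
    { apply CV_mult; auto. }
    apply (UL_sequence _ _ _ L1). eapply cv_ev; [exact L2|].
    exists (Z.to_nat (1 - n)). intros j Hj.
    pose proof (Hnj (psi j)) as H1. pose proof (Hpsi j) as H2.
    unfold V; fold (psi j). set (nn := nj (psi j)) in *. set (xx := xj (psi j)).
    set (SS := CDkernel a b nn xx).
    assert (HS : 0 < sqrt SS) by (apply sqrt_lt_R0; pose proof (CD_ge1 a b nn xx); unfold SS; lra).
    rewrite (proj2 (Z.leb_le (n+1) 0)) by lia. rewrite (proj2 (Z.leb_le n 0)) by lia.
    rewrite (proj2 (Z.leb_le (n-1) 0)) by lia.
    set (m := Z.to_nat (Z.of_nat nn + n - 1)).
    unfold atZ.
    replace (Z.to_nat (Z.of_nat (S nn) + n)) with (m+2)%nat by lia.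
    replace (Z.to_nat (Z.of_nat (S nn) + (n-1))) with (m+1)%nat by lia.
    replace (Z.to_nat (Z.of_nat nn + (n+1))) with (m+2)%nat by lia.
    replace (Z.to_nat (Z.of_nat nn + n)) with (m+1)%nat by lia.
    replace (Z.to_nat (Z.of_nat nn + (n-1))) with m by lia.
    pose proof (opoly_rec a b xx m (Hapos (m+2)%nat ltac:(lia))) as R.
    symmetry.
    apply (Rmult_eq_reg_r (sqrt SS)); [|lra].
    replace ((a (m + 2)%nat * (opoly a b (m + 2) xx / sqrt SS) + b (m + 2)%nat * (opoly a b (m + 1) xx / sqrt SS) +
      a (m + 1)%nat * (opoly a b m xx / sqrt SS)) * sqrt SS) with
      (a (m + 2)%nat * opoly a b (m + 2) xx + b (m + 2)%nat * opoly a b (m + 1) xx +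
      a (m + 1)%nat * opoly a b m xx) by (field; lra).
    rewrite R. field. lra. }
  assert (Hsum : forall L : nat, sum_f_R0 (fun k => v (- Z.of_nat k)%Z ^ 2) L <= 1).
  { intros L.
    pose proof (cv_sum (fun k j => V (- Z.of_nat k)%Z (ph4 j) ^ 2) (fun k => v (- Z.of_nat k)%Z ^ 2) L
       (fun k => cv_sq _ _ (cV (- Z.of_nat k)%Z))) as HL.
    apply (cv_le_ev _ _ _ HL). exists L. intros j Hj.
    pose proof (Hnj (psi j)) as H1. pose proof (Hpsi j) as H2.
    unfold V; fold (psi j). set (nn := nj (psi j)) in *. set (xx := xj (psi j)).
    set (SS := CDkernel a b nn xx).
    assert (HS : 0 < SS) by (pose proof (CD_ge1 a b nn xx); unfold SS; lra).
    rewrite (sum_eq _ (fun k => opoly a b (nn - k)%nat xx ^ 2 * / SS)).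
    - rewrite <- scal_sum. apply Rmult_le_reg_l with SS; auto.
      rewrite <- Rmult_assoc, Rinv_r, Rmult_1_l, Rmult_1_r by lra.
      apply (rev_sum (fun i => opoly a b i xx ^ 2)). intros; apply pow2_ge_0. lia.
    - intros k Hk. rewrite (proj2 (Z.leb_le (- Z.of_nat k) 0)) by lia.
      replace (Z.to_nat (Z.of_nat nn + - Z.of_nat k)) with (nn - k)%nat by lia.
      rewrite ratio_sq by auto. reflexivity. }
  assert (Hv0 : eps <= v 0%Z ^ 2).
  { apply (cv_ge_ev _ _ _ (cv_sq _ _ (cV 0%Z))). exists 0%nat. intros j _.
    unfold V; fold (psi j). simpl (Z.leb 0 0). rewrite Z.add_0_r, Nat2Z.id.
    rewrite (proj2 (Z.leb_le 0 0)) by lia. rewrite ratio_sq. apply Rlt_le, Hrat. pose proof (CD_ge1 a b (nj (psi j)) (xj (psi j))); lra. }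
  pose proof (key ar br x0 v f g CA M Har' Hf Hg Ef Eg Ev Hsum Hw) as H0.
  rewrite H0 in Hv0. simpl in Hv0. lra.
Qed.
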